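(* If $s\ge 3$ and $q\ge m+1$, then $\pi\ge 2n-3q-3m+1$.
   Context: $G$ is a set of size $n$ and $G(\circ)$, $G(\ast)$ are distinct groups on $G$ with the same identity element. $\mathrm{diff}(\circ,\ast)=\{(a,b):a\circ b\ne a\ast b\}$, $\mathrm{dist}(\circ,\ast)=|\mathrm{diff}(\circ,\ast)|$, $\mathrm{dist}_a=|\{b:a\circ b\ne a\ast b\}|$; $H=\{a:\mathrm{dist}_a=0\}$, $h=|H|$; $K=\{a:\mathrm{dist}_a<n/3\}$, $k=|K|$; $m=\min\{\mathrm{dist}_a:\mathrm{dist}_a>0\}$. Standing assumption: $m\ge 3$. Let $q=\lceil n/3\rceil$ and the profit $\pi=\mathrm{dist}(\circ,\ast)-((k-h)m+(n-k)q)$. Let $S=\{(a,b)\in\mathrm{diff}(\circ,\ast):a,b\in K,\ a\ne b\}$, $s=|S|$. *)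

(* Defs.v *)
From mathcomp Require Import all_boot all_order all_algebra.
Set Implicit Arguments. Unset Strict Implicit. Unset Printing Implicit Defensive.
Import GRing.Theory Num.Theory.

Section Defs.
Variable T : finType.

Definition is_group (op : T -> T -> T) (e : T) : Prop :=
  [/\ (forall x y z, op x (op y z) = op (op x y) z),
      (forall x, op e x = x /\ op x e = x) &
      (forall x, exists y, op x y = e /\ op y x = e)].

Variables (op1 op2 : T -> T -> T).

Definition diffset : {set T * T} := [set p | op1 p.1 p.2 != op2 p.1 p.2].
Definition dist : nat := #|diffset|.
Definition dista (a : T) : nat := #|[set b | op1 a b != op2 a b]|.
Definition Hset : {set T} := [set a | dista a == 0].
Definition hcard : nat := #|Hset|.
(* K = {a : dist_a < n/3}  (i.e. 3 dist_a < n), k = |K| *)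
Definition Kset : {set T} := [set a | 3 * dista a < #|T|].
Definition kcard : nat := #|Kset|.
(* m = min { dist_a : dist_a > 0 } (default #|T| if no such a,
   which cannot occur when the operations differ) *)
Definition mmin : nat := \big[minn/#|T|]_(a | 0 < dista a) dista a.
(* q = ceil(n/3) *)
Definition qceil : nat := (#|T| + 2) %/ 3.
Definition profit : int :=
  (dist%:Z - ((kcard%:Z - hcard%:Z) * mmin%:Z + (#|T|%:Z - kcard%:Z) * qceil%:Z))%R.
Definition Sset : {set T * T} :=
  [set p in diffset | [&& p.1 \in Kset, p.2 \in Kset & p.1 != p.2]].
Definition scard : nat := #|Sset|.

End Defs.

(* Main.v *)
Require Import Defs.
From mathcomp Require Import all_boot all_order all_algebra.
Import GRing.Theory Num.Theory.
From mathcomp Require Import zify ring.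
Local Open Scope ring_scope.
Lemma dist_sum (T : finType) (op1 op2 : T -> T -> T) :
  dist op1 op2 = (\sum_a dista op1 op2 a)%N.
Proof.
rewrite /dist -sum1_card big_mkcond /=.
rewrite (eq_bigr (fun a => \sum_b (if (a,b) \in diffset op1 op2 then 1%N else 0%N))).
  by rewrite pair_bigA; apply: eq_bigr => -[a b] _.
move=> a _; rewrite /dista -sum1_card big_mkcond /=.
by apply: eq_bigr => b _; rewrite !inE.
Qed.

Lemma PoszS (I : finType) (F : I -> nat) :
  Posz (\sum_i F i)%N = \sum_i (F i)%:Z.
Proof. by rewrite -natz natr_sum; apply: eq_bigr => i _; rewrite natz. Qed.

Lemma card_sumZ (T : finType) (A : {set T}) :
  (#|A|%:Z) = \sum_a ((a \in A : nat)%:Z).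
Proof.
rewrite -sum1_card big_mkcond /= PoszS; apply: eq_bigr => a _.
by case: (a \in A).
Qed.

Definition gfun (T : finType) (op1 op2 : T -> T -> T) (a : T) : int :=
  (dista op1 op2 a)%:Z - (if a \in Kset op1 op2 then (if a \in Hset op1 op2 then 0%N else mmin op1 op2) else qceil T)%:Z.
Arguments gfun {T}.

Lemma profit_sum (T : finType) (op1 op2 : T -> T -> T) :
  (0 < #|T|)%N -> profit op1 op2 = \sum_a gfun op1 op2 a.
Proof.
move=> n0.
have HK a : a \in Hset op1 op2 -> a \in Kset op1 op2.
  by rewrite !inE => /eqP ->.
have ce a : ((if a \in Kset op1 op2 then (if a \in Hset op1 op2 then 0%N else mmin op1 op2) else qceil T)%:Z
   = ((a \in Kset op1 op2 : nat)%:Z - (a \in Hset op1 op2 : nat)%:Z) * (mmin op1 op2)%:Z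
     + (1 - (a \in Kset op1 op2 : nat)%:Z) * (qceil T)%:Z).
  case hk: (a \in Kset op1 op2); case hh: (a \in Hset op1 op2) => /=; try ring.
  by have := HK a; rewrite hh hk => /(_ isT).
rewrite /profit /gfun sumrB dist_sum PoszS; congr (_ - _).
rewrite (eq_bigr _ (fun a _ => ce a)) big_split /= -!mulr_suml sumrB.
rewrite /kcard /hcard !card_sumZ.
by rewrite sumrB /= sumr_const natz.
Qed.

Lemma size3 (T : eqType) (a1 b1 a2 b2 : T) :
  a1 != b1 -> a2 != b2 -> (a2, b2) != (a1, b1) -> (a2, b2) != (b1, a1) ->
  (3 <= size (undup [:: a1; b1; a2; b2]))%N.
Proof.
move=> h1 h2 h3 h4.
rewrite /= !inE.
repeat (case: eqP => //= ?; subst; rewrite ?eqxx ?inE //=).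
all: try by rewrite ?eqxx in h1 h2 h3 h4.
Qed.

Lemma bigmin_leq (I : eqType) (r : seq I) (P : pred I) (F : I -> nat) x0 a :
  a \in r -> P a -> (\big[minn/x0]_(i <- r | P i) F i <= F a)%N.
Proof.
elim: r => // y r IH; rewrite inE big_cons => /orP[/eqP<- Pa|ar Pa].
  by rewrite Pa geq_minl.
case: (P y); last exact: IH.
by apply: leq_trans (geq_minr _ _) (IH ar Pa).
Qed.

Lemma seq_lb (I : eqType) (l : seq I) (D : I -> nat) (F : I -> int) (c : int) :
  (forall x, x \in l -> (D x)%:Z - c <= F x) ->
  ((\sum_(x <- l) D x)%N)%:Z - (size l)%:Z * c <= \sum_(x <- l) F x.
Proof.
elim: l => [|y l IH] H; first by rewrite !big_nil mul0r subr0.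
rewrite !big_cons /=.
have h1 := H y (mem_head y l).
have h2 := IH (fun x hx => H x (@mem_behead _ (y :: l) x hx)).
rewrite PoszD -addn1 PoszD mulrDl mul1r.
move: h1 h2; set t := (size l)%:Z * c; set u := (\sum_(x <- l) D x)%N; set w := \sum_(x <- l) F x; lia.
Qed.

Lemma undup_bd (I : eqType) (l : seq I) (D : I -> nat) B :
  (forall x, x \in l -> D x <= B)%N ->
  (\sum_(x <- l) D x <= \sum_(x <- undup l) D x + (size l - size (undup l)) * B)%N.
Proof.
elim: l => [|y l IH] H; first by rewrite !big_nil.
have hy : (D y <= B)%N by apply: H; rewrite inE eqxx.
have IH' := IH (fun x hx => H x (@mem_behead _ (y :: l) x hx)).
have su := size_undup l.
rewrite /= big_cons; case: ifP => yl.
  rewrite subSn // mulSn; move: IH'; set t := ((_ - _) * B)%N; lia.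
rewrite big_cons /= subSS; move: IH'; set t := ((_ - _) * B)%N; lia.
Qed.

Lemma ltpred u v : (u < v -> u <= v.-1)%N.
Proof. lia. Qed.

Lemma notK n a b c : (3 * a < n -> 3 * b < n -> n <= c + a + b -> ~~ (3 * c < n))%N.
Proof. lia. Qed.

Lemma final_arith (n q m u dc1 dc2 da1 db1 da2 db2 sU : nat) (sG sA : int) :
  (m < q)%N -> (n <= dc1 + da1 + db1)%N -> (n <= dc2 + da2 + db2)%N -> (u = 3 \/ u = 4)%N ->
  (da1 + db1 + (da2 + db2) <= sU + (4 - u) * q.-1)%N ->
  sU%:Z - u%:Z * m%:Z <= sG ->
  (dc1%:Z - q%:Z) + ((dc2%:Z - q%:Z) + sG) <= sA ->
  (2 * n)%N%:Z - (3 * q)%N%:Z - (3 * m)%N%:Z + 1 <= sA.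
Proof. move=> h1 h2 h3 [->|->] /=; lia. Qed.

Lemma su34 u : (3 <= u -> u <= 4 -> u = 3 \/ u = 4)%N.
Proof. lia. Qed.

Lemma sum_sub (T : finType) (g : T -> int) (s : seq T) :
  (forall a, 0 <= g a) -> uniq s -> \sum_(x <- s) g x <= \sum_a g a.
Proof.
move=> g0 us; rewrite big_uniq // [leRHS](bigID (mem s)) /= lerDl.
by apply: sumr_ge0 => i _.
Qed.

Section G.
Variables (T : finType) (op1 op2 : T -> T -> T) (e : T).
Hypothesis G1 : is_group op1 e.
Hypothesis G2 : is_group op2 e.

Lemma dista_sym a : dista op1 op2 a = dista op2 op1 a.
Proof. by rewrite /dista; apply: eq_card => b; rewrite !inE eq_sym. Qed.

Lemma linj (op : T -> T -> T) b : is_group op e -> injective (op b).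
Proof.
case=> As Id Inv x y H.
have [z [_ Hz]] := Inv b.
by rewrite -(proj1 (Id x)) -(proj1 (Id y)) -Hz -!As H.
Qed.

Lemma rcan (op : T -> T -> T) u v x : is_group op e -> op u x = op v x -> u = v.
Proof.
case=> As Id Inv H.
have [z [Hz _]] := Inv x.
by rewrite -(proj2 (Id u)) -(proj2 (Id v)) -Hz !As H.
Qed.

Lemma key1 a b : op1 a b != op2 a b ->
  (#|T| <= dista op1 op2 (op1 a b) + dista op1 op2 a + dista op1 op2 b)%N.
Proof.
move=> ab.
set Gd := [set x | (op1 b x == op2 b x) && (op1 a (op2 b x) == op2 a (op2 b x))].
have sub1 : Gd \subset [set x | op1 (op1 a b) x != op2 (op1 a b) x].
  apply/subsetP => x; rewrite !inE => /andP[/eqP h1 /eqP h2].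
  case: G1 => As1 _ _.
  rewrite -As1 h1 h2; case: G2 => As2 _ _; rewrite As2.
  apply/negP => /eqP/(rcan _ _ _ _ G2) E; by rewrite E eqxx in ab.
have sub2 : ~: Gd \subset [set x | op1 b x != op2 b x] :|: (op2 b @^-1: [set y | op1 a y != op2 a y]).
  apply/subsetP => x; rewrite !inE negb_and => /orP[->//|->]; by rewrite orbT.
have := cardsC Gd.
have := subset_leq_card sub1.
have := subset_leq_card sub2.
have := leq_card_setU [set x | op1 b x != op2 b x] (op2 b @^-1: [set y | op1 a y != op2 a y]).
rewrite card_preimset; last exact: (linj _ b G2).
rewrite /dista => -[h _]; lia.
Qed.
End G.
Arguments dista_sym {T} op1 op2 a.
Arguments key1 {T op1 op2 e} G1 G2 {a b}.

Lemma key2 {T : finType} {op1 op2 : T -> T -> T} {e : T} {a b} :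
  is_group op1 e -> is_group op2 e -> op1 a b != op2 a b ->
  (#|T| <= dista op1 op2 (op2 a b) + dista op1 op2 a + dista op1 op2 b)%N.
Proof.
move=> G1 G2 ab; rewrite !(dista_sym op1 op2).
by apply: (key1 G2 G1); rewrite eq_sym.
Qed.

Local Close Scope ring_scope.

Theorem lemma10p1 (T : finType) (op1 op2 : T -> T -> T) (e : T) :
  is_group op1 e -> is_group op2 e ->
  (exists a b, op1 a b <> op2 a b) ->
  3 <= mmin op1 op2 ->
  3 <= scard op1 op2 ->
  (mmin op1 op2).+1 <= qceil T ->
  ((2 * #|T|)%:Z - (3 * qceil T)%:Z - (3 * mmin op1 op2)%:Z + 1 <= profit op1 op2)%R.
Proof.
move=> G1 G2 [a0 [b0 _]] m3 s3 mq.
have n0 : (0 < #|T|)%N by apply/card_gt0P; exists a0.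
rewrite profit_sum //.
set d := dista op1 op2.
set m := mmin op1 op2.
set q := qceil T.
set n := #|T|.
have Kin a : (a \in Kset op1 op2) = (3 * d a < n)%N by rewrite inE.
have Hin a : (a \in Hset op1 op2) = (d a == 0)%N by rewrite inE.
have mle a : (0 < d a)%N -> (m <= d a)%N.
  by move=> h; apply: bigmin_leq => //; rewrite mem_index_enum.
have g0 a : (0 <= gfun op1 op2 a)%R.
  rewrite /gfun -/d -/m -/q Kin Hin.
  case: ifP => hk; last by rewrite /q /qceil; lia.
  case: ifP => hh; first lia.
  have := mle a; lia.
have gK a : a \in Kset op1 op2 -> ((d a)%:Z - m%:Z <= gfun op1 op2 a)%R.
  rewrite /gfun -/d -/m -/q Kin Hin => ->.
  case: ifP => hh; lia.
have dK a : a \in Kset op1 op2 -> (d a < q)%N.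
  by rewrite Kin /q /qceil; lia.
have gnK a : a \notin Kset op1 op2 -> gfun op1 op2 a = ((d a)%:Z - q%:Z)%R.
  by rewrite /gfun -/d -/m -/q => /negbTE ->.
set S := Sset op1 op2.
have [p1 p1S] : exists p1, p1 \in S.
  by apply/set0Pn; rewrite -card_gt0; rewrite /scard -/S in s3; lia.
set X := [set p1; (p1.2, p1.1)].
have [p2 p2S] : exists p2, p2 \in S :\: X.
  apply/set0Pn; rewrite -card_gt0.
  have := cardsID X S.
  have := subset_leq_card (subsetIr S X).
  have : (#|X| <= 2)%N by rewrite cards2; case: (_ != _).
  rewrite /scard -/S in s3; lia.
move: p2S; rewrite !inE negb_or => /andP[/andP[n21 n22] p2S].
case: p1 p1S X n21 n22 => a1 b1 p1S _ n21 n22.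
case: p2 p2S n21 n22 => a2 b2 p2S n21 n22.
move: p1S p2S; rewrite !inE /= => /andP[ab1 /and3P[a1k b1k ne1]]
  /andP[ab2 /and3P[a2k b2k ne2]].
have a1K : a1 \in Kset op1 op2 by rewrite Kin.
have b1K : b1 \in Kset op1 op2 by rewrite Kin.
have a2K : a2 \in Kset op1 op2 by rewrite Kin.
have b2K : b2 \in Kset op1 op2 by rewrite Kin.
have k1 := key1 G1 G2 ab1.
set c1 := op1 a1 b1.
have [c2 [c21 k2]] : exists c2, c2 != c1 /\ (n <= d c2 + d a2 + d b2)%N.
  case: (eqVneq (op1 a2 b2) c1) => h.
    exists (op2 a2 b2); split; last exact: (key2 G1 G2 ab2).
    by rewrite -h eq_sym.
  by exists (op1 a2 b2); split; last exact: (key1 G1 G2 ab2).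
have da1 := dK _ a1K; have db1 := dK _ b1K; have da2 := dK _ a2K; have db2 := dK _ b2K.
move: k1 a1k b1k a2k b2k; rewrite -/d -/n -/c1 => k1 a1k b1k a2k b2k.
have c1K : c1 \notin Kset op1 op2 by rewrite Kin -/d; exact: (@notK _ _ _ _ a1k b1k k1).
have c2K : c2 \notin Kset op1 op2 by rewrite Kin -/d; exact: (@notK _ _ _ _ a2k b2k k2).
set U := undup [:: a1; b1; a2; b2].
have UK x : x \in U -> x \in Kset op1 op2.
  by rewrite mem_undup !inE => /or4P[] /eqP ->.
have us : uniq [:: c1, c2 & U].
  rewrite /= undup_uniq inE negb_or eq_sym c21 /= andbT.
  apply/andP; split; apply/negP => /UK; [exact/negP|exact/negP].
have := @sum_sub _ _ _ g0 us.
rewrite !big_cons (gnK _ c1K) (gnK _ c2K).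
have := @seq_lb _ U d (gfun op1 op2) m%:Z (fun x hx => gK x (UK x hx)).
have := @undup_bd _ [:: a1; b1; a2; b2] d q.-1.
have hb : forall x, x \in [:: a1; b1; a2; b2] -> (d x <= q.-1)%N.
  by move=> x; rewrite !inE => /or4P[] /eqP ->; apply: ltpred.
move=> /(_ hb); rewrite -/U !big_cons big_nil addnA => hb2 hU hS.
have s3' := @size3 _ _ _ _ _ ne1 ne2 n21 n22.
rewrite /= addn0 in hb2.
have s4 := size_undup [:: a1; b1; a2; b2].
rewrite -/U /= in s3' s4.
have su : size U = 3 \/ size U = 4.
  exact: su34 s3' s4.
exact: (@final_arith _ _ _ _ _ _ _ _ _ _ _ _ _ mq k1 k2 su hb2 hU hS).
Qed.
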